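(* Let $(G,D,\star)$ be a probabilistic metric space where $\star$ is a continuous triangle function. Then $(\Pi(G),\mathbb D,\star)$ is a completion of $G$: it is complete, $\delta:G\to\Pi(G)$ is an isometric embedding ($\mathbb D(\delta_a,\delta_b)=D(a,b)$) with dense image, and if $(X,\Lambda,\star)$ is any complete probabilistic metric space with an isometric map $\varphi:G\to X$ whose image is dense, then there is a bijective isometry $T:\Pi(G)\to X$ with $T\circ\delta=\varphi$. If moreover $(G,\cdot,D,\star)$ is an invariant probabilistic metric group, then $(\Pi(G),\odot,\mathbb D,\star)$ is its invariant probabilistic metric group completion: $\delta$ is in addition an injective group homomorphism, and if $(X,\Lambda,\star)$ is a complete invariant probabilistic metric group and $\varphi$ an isometric group homomorphism with dense image, then $T$ above is an isometric group isomorphism.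
   Context: A distribution function is a nondecreasing, left-continuous function $F:[-\infty,+\infty]\to[0,1]$ with $F(-\infty)=0$, $F(+\infty)=1$; $\Delta^+$ is the set of distribution functions with $F(0)=0$, ordered pointwise (a complete lattice with maximum $\mathcal H_0$, $\mathcal H_0(t)=0$ for $t\le0$, $1$ for $t>0$). A triangle function is a binary operation $\star$ on $\Delta^+$ that is commutative, associative, nondecreasing in each argument, with $F\star\mathcal H_0=F$. $F_n\xrightarrow{w}F$ means $F_n(t)\to F(t)$ at every continuity point $t\in\mathbb R$ of $F$; $\star$ is continuous if $F_n\star L_n\xrightarrow{w}F\star L$ whenever $F_n\xrightarrow{w}F$, $L_n\xrightarrow{w}L$. A probabilistic metric space $(G,D,\star)$ consists of a set $G$, a triangle function $\star$ and $D:G\times G\to\Delta^+$ with (i) $D(p,q)=\mathcal H_0$ iff $p=q$; (ii) $D(p,q)=D(q,p)$; (iii) $D(p,q)\star D(q,r)\le D(p,r)$. If $(G,\cdot)$ is a group and $D(pr,qr)=D(rp,rq)=D(p,q)$ for all $p,q,r$, it is an invariant probabilistic metric group. A sequence $(z_n)$ is Cauchy if $D(z_n,z_p)\xrightarrow{w}\mathcal H_0$ as $n,p\to\infty$; completeness means every Cauchy sequence has a point $z$ with $D(z_n,z)\xrightarrow{w}\mathcal H_0$. A subset $S$ is dense if every point is the limit (distance $\xrightarrow{w}\mathcal H_0$) of a sequence in $S$. A map $\varphi$ is isometric if it preserves the probabilistic distances. A map $f:G\to\Delta^+$ is probabilistic $1$-Lipschitz if $D(x,y)\star f(y)\le f(x)$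 for all $x,y$. $\delta_a(y)=D(y,a)$. $\Pi(G)$ is the set of probabilistic $1$-Lipschitz maps $f$ for which there is a Cauchy sequence $(a_n)\subset G$ with $D(a_n,x)\xrightarrow{w}f(x)$ for all $x$. $\mathbb D(f,g)=\sup_{x\in G}f(x)\star g(x)$ for $f,g\in\Pi(G)$. For maps $f,g:G\to\Delta^+$, $(f\odot g)(x)=\sup_{y,z\in G,\ yz=x}f(y)\star g(z)$. *)

(* Defs.v *)
From Stdlib Require Import Reals Lra Classical ClassicalEpsilon.
Open Scope R_scope.

Definition left_cont (f : R -> R) (t : R) : Prop :=
  forall eps, 0 < eps -> exists delta, 0 < delta /\
    forall s, t - delta < s < t -> Rabs (f s - f t) < eps.

(* An element of Delta^+, represented by its restriction to the real line
   (the values F(-oo) = 0 and F(+oo) = 1 are fixed by convention). *)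
Record Dplus : Type := mkDplus {
  dfun :> R -> R;
  d_range : forall t, 0 <= dfun t <= 1;
  d_mono : forall s t, s <= t -> dfun s <= dfun t;
  d_lcont : forall t, left_cont dfun t;
  d_zero : dfun 0 = 0 }.

Definition Dle (F L : Dplus) : Prop := forall t, F t <= L t.

Definition Dbot : Dplus.
Proof.
  refine (mkDplus (fun _ => 0) _ _ _ _).
  - intros; lra.
  - intros; lra.
  - intros t eps Heps; exists 1; split; [lra|]; intros; rewrite Rminus_diag, Rabs_R0; lra.
  - reflexivity.
Defined.

Definition H0fun (t : R) : R := if Rle_dec t 0 then 0 else 1.

Definition H0 : Dplus.
Proof.
  refine (mkDplus H0fun _ _ _ _); unfold H0fun.
  - intros t; destruct (Rle_dec t 0); lra.
  - intros s t Hst; destruct (Rle_dec s 0); destruct (Rle_dec t 0); lra.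
  - intros t eps Heps; destruct (Rle_dec t 0).
    + exists 1; split; [lra|]; intros s Hs; destruct (Rle_dec s 0); [|lra].
      rewrite Rminus_diag, Rabs_R0; lra.
    + exists t; split; [lra|]; intros s Hs; destruct (Rle_dec s 0); [lra|].
      rewrite Rminus_diag, Rabs_R0; lra.
  - destruct (Rle_dec 0 0); [reflexivity|lra].
Defined.

Definition D_is_lub (S : Dplus -> Prop) (F : Dplus) : Prop :=
  (forall L, S L -> Dle L F) /\ (forall U, (forall L, S L -> Dle L U) -> Dle F U).

Definition Dsup (S : Dplus -> Prop) : Dplus :=
  epsilon (inhabits Dbot) (fun F => D_is_lub S F).

Definition wconv (Fs : nat -> Dplus) (F : Dplus) : Prop :=
  forall t, continuity_pt F t -> Un_cv (fun n => Fs n t) (F t).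

Definition wconv2 (Fs : nat -> nat -> Dplus) (F : Dplus) : Prop :=
  forall t, continuity_pt F t -> forall eps, eps > 0 -> exists N : nat,
    forall n p : nat, (n >= N)%nat -> (p >= N)%nat -> Rabs (Fs n p t - F t) < eps.

Definition IsTriangleFun (star : Dplus -> Dplus -> Dplus) : Prop :=
  (forall F L, star F L = star L F) /\
  (forall F L M, star F (star L M) = star (star F L) M) /\
  (forall F F' L, Dle F F' -> Dle (star F L) (star F' L)) /\
  (forall F L L', Dle L L' -> Dle (star F L) (star F L')) /\
  (forall F, star F H0 = F).

Definition ContTF (star : Dplus -> Dplus -> Dplus) : Prop :=
  forall (Fs Ls : nat -> Dplus) F L, wconv Fs F -> wconv Ls L ->
    wconv (fun n => star (Fs n) (Ls n)) (star F L).

Definition PMS (X : Type) (Dx : X -> X -> Dplus) (star : Dplus -> Dplus -> Dplus) : Prop :=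
  IsTriangleFun star /\
  (forall p q, Dx p q = H0 <-> p = q) /\
  (forall p q, Dx p q = Dx q p) /\
  (forall p q r, Dle (star (Dx p q) (Dx q r)) (Dx p r)).

Definition IsGroup (X : Type) (mul : X -> X -> X) : Prop :=
  (forall x y z, mul x (mul y z) = mul (mul x y) z) /\
  exists e, (forall x, mul e x = x /\ mul x e = x) /\
            (forall x, exists y, mul x y = e /\ mul y x = e).

Definition Invariant (X : Type) (mul : X -> X -> X) (Dx : X -> X -> Dplus) : Prop :=
  forall p q r, Dx (mul p r) (mul q r) = Dx p q /\ Dx (mul r p) (mul r q) = Dx p q.

Definition IPMGroup (X : Type) (mul : X -> X -> X) (Dx : X -> X -> Dplus)
  (star : Dplus -> Dplus -> Dplus) : Prop :=
  PMS X Dx star /\ IsGroup X mul /\ Invariant X mul Dx.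

Definition Cauchy (X : Type) (Dx : X -> X -> Dplus) (z : nat -> X) : Prop :=
  wconv2 (fun n p => Dx (z n) (z p)) H0.

Definition Converges (X : Type) (Dx : X -> X -> Dplus) (z : nat -> X) (x : X) : Prop :=
  wconv (fun n => Dx (z n) x) H0.

Definition Complete (X : Type) (Dx : X -> X -> Dplus) : Prop :=
  forall z, Cauchy X Dx z -> exists x, Converges X Dx z x.

Definition DenseImage (Y X : Type) (Dx : X -> X -> Dplus) (phi : Y -> X) : Prop :=
  forall x, exists a : nat -> Y, Converges X Dx (fun n => phi (a n)) x.

Definition Isometric (Y X : Type) (Dy : Y -> Y -> Dplus) (Dx : X -> X -> Dplus)
  (phi : Y -> X) : Prop :=
  forall a b, Dx (phi a) (phi b) = Dy a b.

Definition Lip1 (G : Type) (D : G -> G -> Dplus) (star : Dplus -> Dplus -> Dplus)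
  (f : G -> Dplus) : Prop :=
  forall x y, Dle (star (D x y) (f y)) (f x).

Definition delta (G : Type) (D : G -> G -> Dplus) (a : G) : G -> Dplus :=
  fun y => D y a.

Definition inPi (G : Type) (D : G -> G -> Dplus) (star : Dplus -> Dplus -> Dplus)
  (f : G -> Dplus) : Prop :=
  Lip1 G D star f /\
  exists a : nat -> G, Cauchy G D a /\ forall x, wconv (fun n => D (a n) x) (f x).

Definition PiG (G : Type) (D : G -> G -> Dplus) (star : Dplus -> Dplus -> Dplus) : Type :=
  { f : G -> Dplus | inPi G D star f }.

Definition DD (G : Type) (star : Dplus -> Dplus -> Dplus) (f g : G -> Dplus) : Dplus :=
  Dsup (fun F => exists x, F = star (f x) (g x)).

Definition DPi (G : Type) (D : G -> G -> Dplus) (star : Dplus -> Dplus -> Dplus)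
  (f g : PiG G D star) : Dplus :=
  DD G star (proj1_sig f) (proj1_sig g).

Definition odot (G : Type) (mul : G -> G -> G) (star : Dplus -> Dplus -> Dplus)
  (f g : G -> Dplus) : G -> Dplus :=
  fun x => Dsup (fun F => exists y z, mul y z = x /\ F = star (f y) (g z)).

Definition Bijective (A B : Type) (T : A -> B) : Prop :=
  (forall u v, T u = T v -> u = v) /\ (forall b, exists u, T u = b).

(* Main.v *)
Require Import Defs.
From Stdlib Require Import Reals Lra Classical ClassicalEpsilon FunctionalExtensionality ProofIrrelevance Lia.
Open Scope R_scope.

Lemma Dplus_ext (F L : Dplus) : (forall t, F t = L t) -> F = L.
Proof.
  destruct F as [f f1 f2 f3 f4], L as [g g1 g2 g3 g4]; simpl; intro H.
  assert (f = g) by (apply functional_extensionality; exact H). subst g.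
  f_equal; apply proof_irrelevance.
Qed.

Lemma Dle_antisym F L : Dle F L -> Dle L F -> F = L.
Proof. intros H1 H2; apply Dplus_ext; intro t; specialize (H1 t); specialize (H2 t); lra. Qed.

Lemma Dle_refl F : Dle F F.
Proof. intro t; lra. Qed.

Lemma Dle_trans F L M : Dle F L -> Dle L M -> Dle F M.
Proof. intros H1 H2 t; specialize (H1 t); specialize (H2 t); lra. Qed.

Lemma D_ge0 (F : Dplus) t : 0 <= F t.
Proof. apply (d_range F). Qed.
Lemma D_le1 (F : Dplus) t : F t <= 1.
Proof. apply (d_range F). Qed.
Lemma D_neg (F : Dplus) t : t <= 0 -> F t = 0.
Proof. intro H; pose proof (d_mono F _ _ H); rewrite d_zero in H0; pose proof (D_ge0 F t); lra. Qed.
Lemma D_mono (F : Dplus) s t : s <= t -> F s <= F t.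
Proof. apply d_mono. Qed.

Lemma H0_val t : H0 t = if Rle_dec t 0 then 0 else 1.
Proof. reflexivity. Qed.
Lemma H0_pos t : 0 < t -> H0 t = 1.
Proof. intro; rewrite H0_val; destruct (Rle_dec t 0); lra. Qed.

Lemma le_H0 F : Dle F H0.
Proof. intro t; rewrite H0_val; destruct (Rle_dec t 0).
  rewrite D_neg; auto; lra. apply D_le1. Qed.

Definition ccont (f : R -> R) (c : R) : Prop :=
  forall eps, 0 < eps -> exists del, 0 < del /\
    forall s, Rabs (s - c) < del -> Rabs (f s - f c) < eps.

Lemma ccont_cpt f c : ccont f c -> continuity_pt f c.
Proof.
  intros H eps Heps. destruct (H eps Heps) as [d [Hd Hs]].
  exists d; split; auto. intros x [_ Hx]. apply Hs. exact Hx.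
Qed.

Lemma cpt_ccont f c : continuity_pt f c -> ccont f c.
Proof.
  intros H eps Heps. destruct (H eps Heps) as [d [Hd Hs]].
  exists d; split; auto. intros s Hsc.
  destruct (Req_dec c s) as [<-|Hne].
  - rewrite Rminus_diag, Rabs_R0; lra.
  - apply (Hs s). split; [split; [exact I| exact Hne] | exact Hsc].
Qed.

Section Sup.
Variable S : Dplus -> Prop.
Definition Ebag (t x : R) : Prop := x = 0 \/ exists F, S F /\ x = F t.
Lemma Ebag_bound t : bound (Ebag t).
Proof. exists 1; intros x [->|[F [_ ->]]]; [lra| apply D_le1]. Qed.
Lemma Ebag_ne t : exists x, Ebag t x.
Proof. exists 0; left; reflexivity. Qed.
Definition psup t : R := proj1_sig (completeness (Ebag t) (Ebag_bound t) (Ebag_ne t)).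
Lemma psup_lub t : is_lub (Ebag t) (psup t).
Proof. unfold psup; destruct completeness; auto. Qed.
Lemma psup_ub t x : Ebag t x -> x <= psup t.
Proof. intro; apply (proj1 (psup_lub t)); auto. Qed.
Lemma psup_least t M : (forall x, Ebag t x -> x <= M) -> psup t <= M.
Proof. intro; apply (proj2 (psup_lub t)); intros x Hx; auto. Qed.
Lemma psup_approx t eps : 0 < eps -> exists x, Ebag t x /\ psup t - eps < x.
Proof.
  intro He; apply NNPP; intro Hn.
  assert (psup t <= psup t - eps); [|lra].
  apply psup_least; intros x Hx. apply Rnot_lt_le; intro; apply Hn; eauto.
Qed.

Definition PsupD : Dplus.
Proof.
  refine (mkDplus psup _ _ _ _).
  - intro t; split. apply psup_ub; left; auto.
    apply psup_least; intros x [->|[F [_ ->]]]; [lra|apply D_le1].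
  - intros s t Hst. apply psup_least; intros x [->|[F [HF ->]]].
    apply psup_ub; left; auto.
    apply Rle_trans with (F t). apply D_mono; auto. apply psup_ub; right; eauto.
  - intros t eps Heps.
    assert (Hmono : forall s, s <= t -> psup s <= psup t).
    { intros s Hst. apply psup_least; intros x [->|[F [HF ->]]].
      apply psup_ub; left; auto.
      apply Rle_trans with (F t). apply D_mono; auto. apply psup_ub; right; eauto. }
    assert (Hpos : forall s, 0 <= psup s) by (intro s; apply psup_ub; left; auto).
    destruct (psup_approx t (eps/2)) as [x [[->|[F [HF ->]]] Hx]]; [lra| |].
    + exists 1; split; [lra|]. intros s [Hs1 Hs2].
      specialize (Hmono s ltac:(lra)); specialize (Hpos s). rewrite Rabs_left1; lra.
    + destruct (d_lcont F t (eps/2) ltac:(lra)) as [d [Hd Hs]].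
      exists d; split; auto. intros s Hs'. specialize (Hs s Hs').
      assert (F s <= psup s) by (apply psup_ub; right; eauto).
      specialize (Hmono s ltac:(lra)).
      apply Rabs_def2 in Hs. apply Rabs_def1; lra.
  - apply Rle_antisym. apply psup_least; intros x [->|[F [_ ->]]]; [lra|rewrite d_zero; lra].
    apply psup_ub; left; auto.
Defined.

Lemma PsupD_lub : D_is_lub S PsupD.
Proof.
  split.
  - intros L HL t. simpl. apply psup_ub; right; eauto.
  - intros U HU t. simpl. apply psup_least; intros x [->|[F [HF ->]]].
    apply D_ge0. apply HU; auto.
Qed.

Lemma Dsup_lub : D_is_lub S (Dsup S).
Proof. unfold Dsup; apply epsilon_spec. exists PsupD; apply PsupD_lub. Qed.

Lemma Dsup_ub F : S F -> Dle F (Dsup S).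
Proof. apply Dsup_lub. Qed.
Lemma Dsup_least U : (forall F, S F -> Dle F U) -> Dle (Dsup S) U.
Proof. apply Dsup_lub. Qed.
Lemma Dsup_approx t v : 0 <= v -> v < Dsup S t -> exists F, S F /\ v < F t.
Proof.
  intros Hv Hlt. apply NNPP; intro Hn.
  assert (Dle (Dsup S) PsupD) by (apply Dsup_least; apply PsupD_lub).
  assert (PsupD t <= v); [|specialize (H t); lra].
  simpl. apply psup_least; intros x [->|[F [HF ->]]]; auto.
  apply Rnot_lt_le; intro; apply Hn; eauto.
Qed.
End Sup.

Section Dens.
Variable f : R -> R.
Hypothesis Hm : forall s t, s <= t -> f s <= f t.

Definition refineI (pq : R * R) : R * R :=
  let p := fst pq in let q := snd pq in
  let p1 := p + (q-p)/4 in let q1 := q - (q-p)/4 in let m := (p+q)/2 in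
  if Rle_dec (f m - f p1) (f q1 - f m) then (p1, m) else (m, q1).

Lemma refine_spec pq : fst pq < snd pq ->
  fst pq < fst (refineI pq) /\ fst (refineI pq) < snd (refineI pq) /\
  snd (refineI pq) < snd pq /\
  2 * (f (snd (refineI pq)) - f (fst (refineI pq))) <= f (snd pq) - f (fst pq).
Proof.
  destruct pq as [p q]; simpl; intro Hpq. unfold refineI; simpl.
  set (p1 := p + (q-p)/4). set (q1 := q - (q-p)/4). set (m := (p+q)/2).
  assert (f p <= f p1) by (apply Hm; unfold p1; lra).
  assert (f q1 <= f q) by (apply Hm; unfold q1; lra).
  assert (f p1 <= f m) by (apply Hm; unfold p1, m; lra).
  assert (f m <= f q1) by (apply Hm; unfold q1, m; lra).
  destruct (Rle_dec (f m - f p1) (f q1 - f m)); simpl; unfold p1, q1, m in *; repeat split; lra.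
Qed.

Variables a b : R.
Fixpoint seqI (k : nat) : R * R :=
  match k with O => (a, b) | S k => refineI (seqI k) end.

Hypothesis Hab : a < b.

Lemma seqI_inv k : fst (seqI k) < snd (seqI k) /\
  2 ^ k * (f (snd (seqI k)) - f (fst (seqI k))) <= f b - f a.
Proof.
  induction k as [|k [IH1 IH2]]; simpl.
  - split; lra.
  - destruct (refine_spec _ IH1) as [H1 [H2 [H3 H4]]]. split; auto.
    assert (0 < 2 ^ k) by (apply pow_lt; lra). nra.
Qed.

Lemma seqI_step k : fst (seqI k) < fst (seqI (S k)) /\ snd (seqI (S k)) < snd (seqI k).
Proof. simpl. destruct (refine_spec _ (proj1 (seqI_inv k))) as [H1 [H2 [H3 H4]]]; auto. Qed.

Lemma seqI_fst_mono j k : (j <= k)%nat -> fst (seqI j) <= fst (seqI k).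
Proof. induction 1. lra. pose proof (seqI_step m); lra. Qed.
Lemma seqI_snd_mono j k : (j <= k)%nat -> snd (seqI k) <= snd (seqI j).
Proof. induction 1. lra. pose proof (seqI_step m); lra. Qed.
Lemma seqI_nest j k : fst (seqI j) < snd (seqI k).
Proof.
  destruct (Nat.le_ge_cases j k) as [H|H].
  - pose proof (seqI_fst_mono _ _ H); pose proof (proj1 (seqI_inv k)); lra.
  - pose proof (seqI_snd_mono _ _ H); pose proof (proj1 (seqI_inv j)); lra.
Qed.

Definition Eseq (x : R) : Prop := exists k, x = fst (seqI k).
Lemma Eseq_bound : bound Eseq.
Proof. exists b; intros x [k ->]. pose proof (seqI_nest k 0); simpl in H; lra. Qed.
Lemma Eseq_ne : exists x, Eseq x.
Proof. exists a; exists 0%nat; reflexivity. Qed.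
Definition cpt : R := proj1_sig (completeness Eseq Eseq_bound Eseq_ne).

Lemma cpt_in k : fst (seqI k) < cpt < snd (seqI k).
Proof.
  unfold cpt; destruct completeness as [c [Hub Hl]]; simpl.
  pose proof (seqI_step k) as [H1 H2].
  assert (fst (seqI (S k)) <= c) by (apply Hub; exists (S k); auto).
  assert (c <= snd (seqI (S k))).
  { apply Hl; intros x [j ->]. left; apply seqI_nest. }
  lra.
Qed.

Lemma pow2_big eps : 0 < eps -> exists k, f b - f a < eps * 2 ^ k.
Proof.
  intro He. destruct (INR_unbounded ((f b - f a)/eps)) as [k Hk].
  exists k. assert (INR k <= 2 ^ k).
  { clear Hk; induction k. simpl; lra. rewrite S_INR; simpl.
    assert (1 <= 2 ^ k) by (apply pow_R1_Rle; lra). lra. }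
  apply Rmult_gt_compat_r with (r := eps) in Hk; auto.
  unfold Rdiv in Hk. rewrite Rmult_assoc, Rinv_l in Hk by lra. nra.
Qed.

Lemma cptI_ccont : ccont f cpt.
Proof.
  intros eps He. destruct (pow2_big eps He) as [k Hk].
  pose proof (cpt_in k) as [H1 H2]. pose proof (seqI_inv k) as [_ H3].
  assert (0 < 2 ^ k) by (apply pow_lt; lra).
  set (p := fst (seqI k)) in *. set (q := snd (seqI k)) in *.
  exists (Rmin (cpt - p) (q - cpt)); split.
  apply Rmin_glb_lt; lra.
  intros s Hs. assert (Hm1 := Rmin_l (cpt - p) (q - cpt)). assert (Hm2 := Rmin_r (cpt - p) (q - cpt)).
  apply Rabs_def2 in Hs. destruct Hs.
  assert (f p <= f s) by (apply Hm; lra). assert (f s <= f q) by (apply Hm; lra).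
  assert (f p <= f cpt) by (apply Hm; lra). assert (f cpt <= f q) by (apply Hm; lra).
  assert (f q - f p < eps) by nra.
  apply Rabs_def1; lra.
Qed.
End Dens.

Lemma mono_cont_point (f : R -> R) (Hm : forall s t, s <= t -> f s <= f t) a b :
  a < b -> exists c, a < c < b /\ ccont f c.
Proof.
  intro Hab. exists (cpt f Hm a b Hab). split.
  - pose proof (cpt_in f Hm a b Hab 0); simpl in H; exact H.
  - apply cptI_ccont; auto.
Qed.

Lemma common_cont (F L : Dplus) a b : a < b ->
  exists c, a < c < b /\ continuity_pt F c /\ continuity_pt L c.
Proof.
  intro Hab.
  destruct (mono_cont_point (fun t => F t + L t)) with (a := a) (b := b) as [c [Hc Hcc]]; auto.
  { intros s t Hst; pose proof (D_mono F s t Hst); pose proof (D_mono L s t Hst); lra. }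
  exists c; split; auto; split; apply ccont_cpt; intros eps He;
    destruct (Hcc eps He) as [d [Hd Hs]]; exists d; split; auto; intros s Hsd;
    specialize (Hs s Hsd); simpl in Hs;
    destruct (Rle_dec s c) as [Hsc|Hsc].
  all: try (pose proof (D_mono F s c Hsc); pose proof (D_mono L s c Hsc)).
  all: try (assert (c <= s) by lra; pose proof (D_mono F c s ltac:(lra)); pose proof (D_mono L c s ltac:(lra))).
  all: apply Rabs_def2 in Hs; apply Rabs_def1; lra.
Qed.

Lemma Un_cv_le_lim (u v : nat -> R) l1 l2 : Un_cv u l1 -> Un_cv v l2 -> (forall n, u n <= v n) -> l1 <= l2.
Proof. intros; eapply Rle_cv_lim; eauto. Qed.

Lemma Un_cv_const x : Un_cv (fun _ => x) x.
Proof. intros e He; exists 0%nat; intros; unfold Rdist; rewrite Rminus_diag, Rabs_R0; lra. Qed.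

Lemma wconv_le Fs Ls F L : wconv Fs F -> wconv Ls L -> (forall n, Dle (Fs n) (Ls n)) -> Dle F L.
Proof.
  intros HF HL Hle t. apply Rnot_lt_le; intro Hlt.
  set (e := F t - L t).
  destruct (d_lcont F t (e/2) ltac:(unfold e; lra)) as [d [Hd Hs]].
  destruct (common_cont F L (t - d) t ltac:(lra)) as [c [Hc [HcF HcL]]].
  assert (F c <= L c) by (eapply Rle_cv_lim; [intro n; apply (Hle n c) | apply HF; auto | apply HL; auto]).
  specialize (Hs c Hc). apply Rabs_def2 in Hs.
  pose proof (D_mono L c t ltac:(lra)). unfold e in *; lra.
Qed.

Lemma wconv_const F : wconv (fun _ => F) F.
Proof. intros t _; apply Un_cv_const. Qed.

Lemma wconv_unique Fs F L : wconv Fs F -> wconv Fs L -> F = L.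
Proof. intros; apply Dle_antisym; eapply wconv_le; eauto; intros; apply Dle_refl. Qed.

Lemma wconv_ext Fs Gs F : (forall n, Fs n = Gs n) -> wconv Fs F -> wconv Gs F.
Proof. intros H; replace Gs with Fs; auto; apply functional_extensionality; auto. Qed.

Lemma wconv_le_const Fs F L : wconv Fs F -> (forall n, Dle (Fs n) L) -> Dle F L.
Proof. intros HF HL; eapply wconv_le; [exact HF| apply wconv_const| exact HL]. Qed.
Lemma wconv_ge_const Fs F L : wconv Fs F -> (forall n, Dle L (Fs n)) -> Dle L F.
Proof. intros HF HL; eapply wconv_le; [apply wconv_const| exact HF| exact HL]. Qed.

Definition toH0 (Fs : nat -> Dplus) : Prop :=
  forall t, 0 < t -> forall eps, 0 < eps -> exists N, forall n, (n >= N)%nat -> 1 - eps < Fs n t.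
Definition toH0_2 (w : nat -> nat -> Dplus) : Prop :=
  forall t, 0 < t -> forall eps, 0 < eps -> exists N, forall n p, (n >= N)%nat -> (p >= N)%nat -> 1 - eps < w n p t.

Lemma H0_ccont t : 0 < t -> ccont H0 t.
Proof.
  intros Ht e He; exists t; split; auto; intros s Hs.
  apply Rabs_def2 in Hs. rewrite !H0_pos by lra. rewrite Rminus_diag, Rabs_R0; lra.
Qed.

Lemma wconv_toH0 Fs : wconv Fs H0 -> toH0 Fs.
Proof.
  intros H t Ht e He. destruct (H t (ccont_cpt _ _ (H0_ccont t Ht)) e He) as [N HN].
  exists N; intros n Hn; specialize (HN n Hn); unfold Rdist in HN; rewrite H0_pos in HN by lra.
  apply Rabs_def2 in HN; lra.
Qed.

Lemma toH0_wconv Fs : toH0 Fs -> wconv Fs H0.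
Proof.
  intros H t _ e He. destruct (Rle_dec t 0) as [Ht|Ht].
  - exists 0%nat; intros n _; unfold Rdist; rewrite D_neg, (D_neg H0) by lra. rewrite Rminus_diag, Rabs_R0; lra.
  - destruct (H t ltac:(lra) e He) as [N HN]; exists N; intros n Hn; specialize (HN n Hn).
    unfold Rdist; rewrite H0_pos by lra. pose proof (D_le1 (Fs n) t). apply Rabs_def1; lra.
Qed.

Lemma toH0_2_wconv2 w : toH0_2 w <-> wconv2 w H0.
Proof.
  split.
  - intros H t _ e He. destruct (Rle_dec t 0) as [Ht|Ht].
    + exists 0%nat; intros n p _ _; rewrite D_neg, (D_neg H0) by lra. rewrite Rminus_diag, Rabs_R0; lra.
    + destruct (H t ltac:(lra) e He) as [N HN]; exists N; intros n p Hn Hp; specialize (HN n p Hn Hp).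
      rewrite H0_pos by lra. pose proof (D_le1 (w n p) t). apply Rabs_def1; lra.
  - intros H t Ht e He. destruct (H t (ccont_cpt _ _ (H0_ccont t Ht)) e He) as [N HN].
    exists N; intros n p Hn Hp; specialize (HN n p Hn Hp); rewrite H0_pos in HN by lra.
    apply Rabs_def2 in HN; lra.
Qed.

Lemma toH0_mono Fs Gs : toH0 Fs -> (forall n, Dle (Fs n) (Gs n)) -> toH0 Gs.
Proof. intros H Hle t Ht e He; destruct (H t Ht e He) as [N HN]; exists N; intros n Hn;
  specialize (HN n Hn); specialize (Hle n t); lra. Qed.
Lemma toH0_2_mono Fs Gs : toH0_2 Fs -> (forall n p, Dle (Fs n p) (Gs n p)) -> toH0_2 Gs.
Proof. intros H Hle t Ht e He; destruct (H t Ht e He) as [N HN]; exists N; intros n p Hn Hp;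
  specialize (HN n p Hn Hp); specialize (Hle n p t); lra. Qed.
Lemma toH0_ext Fs Gs : toH0 Fs -> (forall n, Fs n = Gs n) -> toH0 Gs.
Proof. intros H E; apply (toH0_mono Fs); auto; intros n; rewrite E; apply Dle_refl. Qed.
Lemma toH0_2_ext Fs Gs : toH0_2 Fs -> (forall n p, Fs n p = Gs n p) -> toH0_2 Gs.
Proof. intros H E; apply (toH0_2_mono Fs); auto; intros n p; rewrite E; apply Dle_refl. Qed.

Lemma toH0_const : toH0 (fun _ => H0).
Proof. intros t Ht e He; exists 0%nat; intros; rewrite H0_pos; lra. Qed.
Lemma toH0_2_const : toH0_2 (fun _ _ => H0).
Proof. intros t Ht e He; exists 0%nat; intros; rewrite H0_pos; lra. Qed.

Lemma toH0_sub Fs (n : nat -> nat) : toH0 Fs -> (forall k, (n k >= k)%nat) -> toH0 (fun k => Fs (n k)).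
Proof. intros H Hn t Ht e He; destruct (H t Ht e He) as [N HN]; exists N; intros k Hk;
  apply HN; specialize (Hn k); lia. Qed.

Lemma toH0_2_sub w (n p : nat -> nat) : toH0_2 w -> (forall k, (n k >= k)%nat /\ (p k >= k)%nat) ->
  toH0 (fun k => w (n k) (p k)).
Proof. intros H Hn t Ht e He; destruct (H t Ht e He) as [N HN]; exists N; intros k Hk;
  apply HN; specialize (Hn k); lia. Qed.

Lemma toH0_2_of_sub w : (forall n p : nat -> nat, (forall k, (n k >= k)%nat /\ (p k >= k)%nat) ->
  toH0 (fun k => w (n k) (p k))) -> toH0_2 w.
Proof.
  intros H t Ht e He. apply NNPP; intro Hn.
  assert (Hall : forall N, exists np : nat * nat, (fst np >= N)%nat /\ (snd np >= N)%nat /\ w (fst np) (snd np) t <= 1 - e).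
  { intro N. apply NNPP; intro Hn2. apply Hn; exists N; intros n p Hn' Hp'.
    apply Rnot_le_lt; intro Hle. apply Hn2; exists (n, p); simpl; auto. }
  set (g := fun N => epsilon (inhabits (0%nat, 0%nat)) (fun np : nat * nat => (fst np >= N)%nat /\ (snd np >= N)%nat /\ w (fst np) (snd np) t <= 1 - e)).
  assert (Hg : forall N, (fst (g N) >= N)%nat /\ (snd (g N) >= N)%nat /\ w (fst (g N)) (snd (g N)) t <= 1 - e).
  { intro N; unfold g; apply epsilon_spec; auto. }
  destruct (H (fun k => fst (g k)) (fun k => snd (g k))) with (t := t) (eps := e) as [N HN]; auto.
  { intro k; specialize (Hg k); tauto. }
  specialize (HN N (le_n N)); specialize (Hg N); simpl in HN; lra.
Qed.

Lemma Un_cv_ge u l v N : Un_cv u l -> (forall n, (n >= N)%nat -> v <= u n) -> v <= l.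
Proof.
  intros H Hv. apply Rnot_lt_le; intro Hl. destruct (H (v - l) ltac:(lra)) as [M HM].
  specialize (HM (max M N) ltac:(lia)); specialize (Hv (max M N) ltac:(lia)).
  unfold Rdist in HM; apply Rabs_def2 in HM; lra.
Qed.

Lemma wconv_lb Fs F s t v N : wconv Fs F -> (forall n, (n >= N)%nat -> v <= Fs n s) -> s < t -> v <= F t.
Proof.
  intros H Hv Hst. destruct (common_cont F F s t Hst) as [c [Hc [Hcc _]]].
  apply Rle_trans with (F c); [|apply D_mono; lra].
  apply (Un_cv_ge (fun n => Fs n c) _ v N); auto.
  intros n Hn; specialize (Hv n Hn); pose proof (D_mono (Fs n) s c ltac:(lra)); lra.
Qed.

Lemma toH0_diag_lim (w : nat -> nat -> Dplus) (L : nat -> Dplus) :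
  toH0_2 w -> (forall n, wconv (fun m => w n m) (L n)) -> toH0 L.
Proof.
  intros Hw HL t Ht e He. destruct (Hw (t/2) ltac:(lra) (e/2) ltac:(lra)) as [N HN].
  exists N; intros n Hn. assert (1 - e/2 <= L n t); [|lra].
  apply (wconv_lb (fun m => w n m) (L n) (t/2) t (1 - e/2) N); auto; [|lra].
  intros m Hm; left; apply HN; auto.
Qed.

Set Default Proof Using "All".

Definition stepf (c s t : R) : R := if Rle_dec t (Rmax 0 s) then 0 else Rmax 0 (Rmin 1 c).

Definition stepD (c s : R) : Dplus.
Proof.
  refine (mkDplus (stepf c s) _ _ _ _); unfold stepf.
  - intro t; destruct (Rle_dec t (Rmax 0 s)); [lra|].
    split. apply Rmax_l. apply Rmax_lub; [lra| apply Rmin_l].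
  - intros x y Hxy; destruct (Rle_dec x (Rmax 0 s)); destruct (Rle_dec y (Rmax 0 s)).
    lra. apply Rmax_l. lra. lra.
  - intros t eps Heps; destruct (Rle_dec t (Rmax 0 s)).
    + exists 1; split; [lra|]; intros x Hx; destruct (Rle_dec x (Rmax 0 s)); [|lra].
      rewrite Rminus_diag, Rabs_R0; lra.
    + exists (t - Rmax 0 s); split; [lra|]; intros x Hx; destruct (Rle_dec x (Rmax 0 s)); [lra|].
      rewrite Rminus_diag, Rabs_R0; lra.
  - destruct (Rle_dec 0 (Rmax 0 s)); [reflexivity|]. exfalso; apply n; apply Rmax_l.
Defined.

Lemma stepD_val c s t : 0 <= s -> 0 <= c <= 1 -> stepD c s t = if Rle_dec t s then 0 else c.
Proof.
  intros Hs Hc. change (stepf c s t = if Rle_dec t s then 0 else c). unfold stepf.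
  rewrite Rmax_right by lra. rewrite Rmin_right by lra. rewrite Rmax_right by lra. reflexivity.
Qed.

Section Star.
Variable star : Dplus -> Dplus -> Dplus.
Hypothesis HT : IsTriangleFun star.
Hypothesis Hc : ContTF star.

Lemma star_comm F L : star F L = star L F.
Proof. apply HT. Qed.
Lemma star_assoc F L M : star F (star L M) = star (star F L) M.
Proof. apply HT. Qed.
Lemma star_H0r F : star F H0 = F.
Proof. apply HT. Qed.
Lemma star_H0l F : star H0 F = F.
Proof. rewrite star_comm; apply star_H0r. Qed.
Lemma star_mono F F' L L' : Dle F F' -> Dle L L' -> Dle (star F L) (star F' L').
Proof.
  intros H1 H2. apply Dle_trans with (star F' L). apply HT; auto. apply HT; auto.
Qed.
Lemma star_le_l F L : Dle (star F L) F.
Proof. rewrite <- (star_H0r F) at 2. apply star_mono; [apply Dle_refl| apply le_H0]. Qed.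
Lemma star_le_r F L : Dle (star F L) L.
Proof. rewrite star_comm; apply star_le_l. Qed.

Lemma wconv_star Fs Ls F L : wconv Fs F -> wconv Ls L -> wconv (fun n => star (Fs n) (Ls n)) (star F L).
Proof. apply Hc. Qed.

Lemma toH0_star a b : toH0 a -> toH0 b -> toH0 (fun n => star (a n) (b n)).
Proof.
  intros Ha Hb. apply wconv_toH0. rewrite <- (star_H0r H0). apply wconv_star; apply toH0_wconv; auto.
Qed.

Lemma toH0_2_star A B : toH0_2 A -> toH0_2 B -> toH0_2 (fun m n => star (A m n) (B m n)).
Proof.
  intros HA HB. apply toH0_2_of_sub; intros n p Hnp.
  apply (toH0_star (fun k => A (n k) (p k)) (fun k => B (n k) (p k))); apply toH0_2_sub; auto.
Qed.

Lemma toH0_2_prod a b : toH0 a -> toH0 b -> toH0_2 (fun m n => star (a m) (b n)).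
Proof.
  intros Ha Hb. apply toH0_2_of_sub; intros n p Hnp.
  apply (toH0_star (fun k => a (n k)) (fun k => b (p k))); apply toH0_sub; auto; intro k; apply Hnp.
Qed.

Lemma wconv_H0star a Ls L : toH0 a -> wconv Ls L -> wconv (fun n => star (a n) (Ls n)) L.
Proof. intros Ha HL. rewrite <- (star_H0l L). apply wconv_star; auto. apply toH0_wconv; auto. Qed.

Lemma wconv_starH0 a Ls L : toH0 a -> wconv Ls L -> wconv (fun n => star (Ls n) (a n)) L.
Proof. intros Ha HL. rewrite <- (star_H0r L). apply wconv_star; auto. apply toH0_wconv; auto. Qed.

Lemma conv_exists (u : nat -> Dplus) (w : nat -> nat -> Dplus) :
  toH0_2 w -> (forall m n, Dle (star (w m n) (u n)) (u m)) -> exists U, wconv u U.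
Proof.
  intros Hw Hu.
  set (S := fun F => exists c s, 0 <= s /\ 0 <= c /\ (exists N, forall n, (n >= N)%nat -> c <= u n s) /\ F = stepD c s).
  exists (Dsup S). intros t Hct. apply cpt_ccont in Hct.
  destruct (Rle_dec t 0) as [Ht|Ht].
  { rewrite (D_neg (Dsup S)) by lra. intros e He; exists 0%nat; intros n _. unfold Rdist.
    rewrite D_neg by lra. rewrite Rminus_diag, Rabs_R0; lra. }
  assert (Ht' : 0 < t) by lra. clear Ht.
  intros e He.
  assert (Hlow : exists N1, forall n, (n >= N1)%nat -> Dsup S t - e < u n t).
  { destruct (Rlt_dec (Dsup S t - e) 0) as [Hneg|Hneg].
    - exists 0%nat; intros n _; pose proof (D_ge0 (u n) t); lra.
    - destruct (Dsup_approx S t (Dsup S t - e)) as [F [[c [s [Hs [Hc0 [[N HN] ->]]]]] Hv]]; [lra|lra|].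
      assert (Hc1 : c <= 1) by (specialize (HN N (le_n N)); pose proof (D_le1 (u N) s); lra).
      rewrite stepD_val in Hv by lra. destruct (Rle_dec t s) as [Hts|Hts]; [lra|].
      exists N; intros n0 Hn0; specialize (HN n0 Hn0); pose proof (D_mono (u n0) s t ltac:(lra)); lra. }
  assert (Hup : exists N2, forall n, (n >= N2)%nat -> u n t < Dsup S t + e).
  { apply NNPP; intro Hn.
    assert (Hfreq : forall N, exists n, (n >= N)%nat /\ Dsup S t + e <= u n t).
    { intro N; apply NNPP; intro Hn2; apply Hn; exists N; intros n Hn'.
      apply Rnot_le_lt; intro; apply Hn2; eauto. }
    set (c := Dsup S t + e).
    assert (Hc1 : c <= 1) by (destruct (Hfreq 0%nat) as [n [_ Hn']]; pose proof (D_le1 (u n) t); unfold c; lra).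
    assert (HUt0 : 0 <= Dsup S t) by apply D_ge0.
    destruct (Hct (e/2) ltac:(lra)) as [d [Hd Hdd]].
    set (t1 := t + d/2). set (t2 := t + d/4).
    assert (HU1 : Dsup S t1 < Dsup S t + e/2).
    { specialize (Hdd t1 ltac:(unfold t1; rewrite Rabs_right; lra)). apply Rabs_def2 in Hdd; lra. }
    assert (Hev : exists M, forall m, (m >= M)%nat -> c - e/2 <= u m t2).
    { apply NNPP; intro Hn2.
      assert (Hfreq2 : forall M, exists m, (m >= M)%nat /\ u m t2 < c - e/2).
      { intro M; apply NNPP; intro Hn3; apply Hn2; exists M; intros m Hm.
        apply Rnot_lt_le; intro; apply Hn3; eauto. }
      set (nk := fun k => epsilon (inhabits 0%nat) (fun n => (n >= k)%nat /\ Dsup S t + e <= u n t)).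
      set (mk := fun k => epsilon (inhabits 0%nat) (fun m => (m >= k)%nat /\ u m t2 < c - e/2)).
      assert (Hnk : forall k, (nk k >= k)%nat /\ Dsup S t + e <= u (nk k) t) by (intro k; apply epsilon_spec; auto).
      assert (Hmk : forall k, (mk k >= k)%nat /\ u (mk k) t2 < c - e/2) by (intro k; apply epsilon_spec; auto).
      set (B := stepD c t).
      assert (HB : forall k, Dle B (u (nk k))).
      { intros k r. unfold B; rewrite stepD_val by (unfold c in *; lra). destruct (Rle_dec r t). apply D_ge0.
        destruct (Hnk k) as [_ Hk]. pose proof (D_mono (u (nk k)) t r ltac:(lra)). unfold c; lra. }
      assert (HA : toH0 (fun k => w (mk k) (nk k))).
      { apply toH0_2_sub; auto. intro k; split; [apply Hmk|apply Hnk]. }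
      assert (Hconv : wconv (fun k => star (w (mk k) (nk k)) B) B).
      { apply wconv_H0star; auto. apply wconv_const. }
      assert (HBc : continuity_pt B t2).
      { apply ccont_cpt. intros e' He'; exists (t2 - t); split; [unfold t2; lra|].
        intros s Hs; apply Rabs_def2 in Hs. unfold B; rewrite !stepD_val by (unfold c in *; lra).
        destruct (Rle_dec s t); [unfold t2 in *; lra|]. destruct (Rle_dec t2 t); [unfold t2 in *; lra|].
        rewrite Rminus_diag, Rabs_R0; lra. }
      destruct (Hconv t2 HBc (e/2) ltac:(lra)) as [K HK].
      specialize (HK K (le_n K)). unfold Rdist in HK. apply Rabs_def2 in HK.
      assert (HBv : B t2 = c) by (unfold B; rewrite stepD_val by (unfold c in *; lra);
                                   destruct (Rle_dec t2 t); [unfold t2 in *; lra| reflexivity]).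
      rewrite HBv in HK.
      pose proof (Hu (mk K) (nk K) t2) as Hle.
      pose proof (star_mono _ _ _ _ (Dle_refl (w (mk K) (nk K))) (HB K) t2) as Hle2.
      destruct (Hmk K) as [_ HmK]. lra. }
    destruct Hev as [M HM].
    assert (HS : S (stepD (c - e/2) t2)).
    { exists (c - e/2), t2; repeat split; try (unfold t2, c; lra). exists M; auto. }
    pose proof (Dsup_ub S _ HS t1) as Hle.
    rewrite stepD_val in Hle by (unfold t2, c in *; lra). destruct (Rle_dec t1 t2); [unfold t1, t2 in *; lra|].
    unfold c in Hle; lra. }
  destruct Hlow as [N1 HN1]; destruct Hup as [N2 HN2].
  exists (max N1 N2); intros n Hn. unfold Rdist.
  specialize (HN1 n ltac:(lia)); specialize (HN2 n ltac:(lia)). apply Rabs_def1; lra.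
Qed.

Section PMSfacts.
Variable X : Type.
Variable Lam : X -> X -> Dplus.
Hypothesis HX : PMS X Lam star.

Lemma L_sym p q : Lam p q = Lam q p.
Proof. apply HX. Qed.
Lemma L_tri p q r : Dle (star (Lam p q) (Lam q r)) (Lam p r).
Proof. apply HX. Qed.
Lemma L_eq p q : Lam p q = H0 -> p = q.
Proof. apply HX. Qed.
Lemma L_refl p : Lam p p = H0.
Proof. apply HX; auto. Qed.

Lemma L_tri3 p q r s : Dle (star (Lam p q) (star (Lam q r) (Lam r s))) (Lam p s).
Proof.
  eapply Dle_trans; [|apply (L_tri p q s)]. apply star_mono; [apply Dle_refl| apply L_tri].
Qed.

Lemma Cauchy_iff z : Cauchy X Lam z <-> toH0_2 (fun n p => Lam (z n) (z p)).
Proof. unfold Cauchy; rewrite toH0_2_wconv2; tauto. Qed.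
Lemma Conv_iff z x : Converges X Lam z x <-> toH0 (fun n => Lam (z n) x).
Proof. unfold Converges; split; [apply wconv_toH0|apply toH0_wconv]. Qed.

Lemma gen_lim x y : Cauchy X Lam x -> Cauchy X Lam y -> exists U, wconv (fun n => Lam (x n) (y n)) U.
Proof.
  intros Hx Hy. apply Cauchy_iff in Hx; apply Cauchy_iff in Hy.
  apply (conv_exists _ (fun m n => star (Lam (x m) (x n)) (Lam (y n) (y m)))).
  - apply toH0_2_star; auto. apply (toH0_2_ext (fun m n => Lam (y m) (y n))); auto.
    intros; apply L_sym.
  - intros m n. eapply Dle_trans; [|apply (L_tri3 (x m) (x n) (y n) (y m))].
    rewrite <- star_assoc. rewrite (star_comm (Lam (y n) (y m))). apply Dle_refl.
Qed.

Lemma Conv_Cauchy z x : Converges X Lam z x -> Cauchy X Lam z.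
Proof.
  intro Hz; apply Conv_iff in Hz; apply Cauchy_iff.
  apply (toH0_2_mono (fun m n => star (Lam (z m) x) (Lam x (z n)))).
  apply toH0_2_prod; auto. apply (toH0_ext (fun n => Lam (z n) x)); auto; intros; apply L_sym.
  intros; apply L_tri.
Qed.

Lemma Conv_unique z x y : Converges X Lam z x -> Converges X Lam z y -> x = y.
Proof.
  intros Hx Hy; apply Conv_iff in Hx; apply Conv_iff in Hy. apply L_eq.
  apply Dle_antisym; [apply le_H0|].
  apply (wconv_le_const (fun n => star (Lam x (z n)) (Lam (z n) y))).
  - rewrite <- (star_H0r H0). apply wconv_star; apply toH0_wconv; auto.
    apply (toH0_ext (fun n => Lam (z n) x)); auto; intros; apply L_sym.
  - intros; apply L_tri.
Qed.

Lemma Conv_const x : Converges X Lam (fun _ => x) x.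
Proof. apply Conv_iff. apply (toH0_ext (fun _ => H0)). apply toH0_const. intros; rewrite L_refl; auto. Qed.

Lemma L_cont x y xs ys : Converges X Lam xs x -> Converges X Lam ys y ->
  wconv (fun n => Lam (xs n) (ys n)) (Lam x y).
Proof.
  intros Hx Hy.
  destruct (gen_lim xs ys) as [U HU]; try (eapply Conv_Cauchy; eauto).
  apply Conv_iff in Hx; apply Conv_iff in Hy.
  assert (Hx' : toH0 (fun n => Lam x (xs n))) by (apply (toH0_ext _ _ Hx); intros; apply L_sym).
  assert (Hy' : toH0 (fun n => Lam y (ys n))) by (apply (toH0_ext _ _ Hy); intros; apply L_sym).
  replace (Lam x y) with U; auto. apply Dle_antisym.
  - apply (wconv_le (fun n => star (Lam x (xs n)) (star (Lam (xs n) (ys n)) (Lam (ys n) y))) (fun _ => Lam x y)).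
    + apply wconv_H0star; auto. apply wconv_starH0; auto.
    + apply wconv_const.
    + intros; apply L_tri3.
  - apply (wconv_le (fun n => star (Lam (xs n) x) (star (Lam x y) (Lam y (ys n)))) (fun n => Lam (xs n) (ys n)) _ U).
    + apply wconv_H0star; auto. apply wconv_starH0; auto. apply wconv_const.
    + auto.
    + intros; apply L_tri3.
Qed.
End PMSfacts.
End Star.

Section GP.
Variable star : Dplus -> Dplus -> Dplus.
Hypothesis HT : IsTriangleFun star.
Hypothesis Hc : ContTF star.
Variable G : Type.
Variable D : G -> G -> Dplus.
Hypothesis HG : PMS G D star.

Definition Rep (f : G -> Dplus) (a : nat -> G) : Prop :=
  Cauchy G D a /\ forall x, wconv (fun n => D (a n) x) (f x).

Lemma Rep_Lip f a : Rep f a -> Lip1 G D star f.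
Proof.
  intros [Ha Hf] x y.
  apply (wconv_le (fun n => star (D x y) (D (a n) y)) (fun n => D (a n) x)); auto.
  - apply wconv_star; auto. apply wconv_const.
  - intro n. rewrite star_comm by auto. rewrite (L_sym _ HT Hc G D HG x y).
    apply (L_tri _ HT Hc G D HG).
Qed.

Lemma Rep_in f a : Rep f a -> inPi G D star f.
Proof. intro H; split; [eapply Rep_Lip; eauto| exists a; exact H]. Qed.

Lemma Cauchy_const (a : G) : Cauchy G D (fun _ => a).
Proof. apply (Cauchy_iff _ HT Hc G D HG). apply (toH0_2_ext (fun _ _ => H0)). apply toH0_2_const.
  intros; rewrite (L_refl _ HT Hc G D HG); auto. Qed.

Lemma limfun_exists a : Cauchy G D a -> exists f, Rep f a.
Proof.
  intro Ha.
  exists (fun x => epsilon (inhabits Dbot) (fun U => wconv (fun n => D (a n) x) U)).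
  split; auto. intro x. apply epsilon_spec.
  apply (gen_lim _ HT Hc G D HG a (fun _ => x)); auto. apply Cauchy_const.
Qed.

Lemma Rep_self f a : Rep f a -> toH0 (fun n => f (a n)).
Proof.
  intros [Ha Hf]. apply (toH0_diag_lim (fun n m => D (a m) (a n))).
  - apply (Cauchy_iff _ HT Hc G D HG) in Ha. apply (toH0_2_ext _ _ Ha). intros; apply (L_sym _ HT Hc G D HG).
  - intro n; apply Hf.
Qed.

Lemma DD_formula f g a b : Rep f a -> Rep g b ->
  wconv (fun n => D (a n) (b n)) (DD G star f g).
Proof.
  intros Hfa Hgb. pose proof Hfa as [Ha Hf]. pose proof Hgb as [Hb Hg].
  destruct (gen_lim _ HT Hc G D HG a b Ha Hb) as [U HU].
  replace (DD G star f g) with U; auto. apply Dle_antisym.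
  - apply (wconv_le_const (fun n => star (f (a n)) (star (D (a n) (b n)) (g (b n))))).
    + apply wconv_H0star; auto. eapply Rep_self; eauto. apply wconv_starH0; auto. eapply Rep_self; eauto.
    + intro n. eapply Dle_trans; [|apply (Dsup_ub _ (star (f (a n)) (g (a n))))]; [|exists (a n); auto].
      apply star_mono; auto. apply Dle_refl. apply (Rep_Lip g b); auto.
  - apply Dsup_least. intros F [z ->].
    apply (wconv_le (fun n => star (D (a n) z) (D (b n) z)) (fun n => D (a n) (b n))); auto.
    intro n. rewrite (L_sym _ HT Hc G D HG (b n) z). apply (L_tri _ HT Hc G D HG).
Qed.

Lemma DD_lim f g a b L : Rep f a -> Rep g b -> wconv (fun n => D (a n) (b n)) L -> DD G star f g = L.
Proof. intros; eapply wconv_unique; [apply DD_formula|]; eauto. Qed.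

Lemma Rep_delta a : Rep (delta G D a) (fun _ => a).
Proof. split. apply Cauchy_const. intro x; unfold delta. rewrite (L_sym _ HT Hc G D HG x a). apply wconv_const. Qed.

Lemma delta_in a : inPi G D star (delta G D a).
Proof. eapply Rep_in; apply Rep_delta. Qed.

Lemma DD_delta a b : DD G star (delta G D a) (delta G D b) = D a b.
Proof. apply (DD_lim _ _ (fun _ => a) (fun _ => b)); try apply Rep_delta. apply wconv_const. Qed.

Lemma DD_delta_l f a b : Rep f a -> DD G star (delta G D b) f = f b.
Proof.
  intro Hf. apply (DD_lim _ _ (fun _ => b) a); auto. apply Rep_delta.
  apply (wconv_ext (fun n => D (a n) b)). intros; apply (L_sym _ HT Hc G D HG). apply Hf.
Qed.

Lemma inPi_rep f : inPi G D star f -> exists a, Rep f a.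
Proof. intros [_ H]; exact H. Qed.

Lemma DD_refl f : inPi G D star f -> DD G star f f = H0.
Proof.
  intro Hf; destruct (inPi_rep _ Hf) as [a Ha]. apply (DD_lim _ _ a a); auto.
  apply (wconv_ext (fun _ => H0)). intros; rewrite (L_refl _ HT Hc G D HG); auto. apply wconv_const.
Qed.

Lemma DD_sym f g : inPi G D star f -> inPi G D star g -> DD G star f g = DD G star g f.
Proof.
  intros Hf Hg; destruct (inPi_rep _ Hf) as [a Ha]; destruct (inPi_rep _ Hg) as [b Hb].
  apply (DD_lim _ _ a b); auto. apply (wconv_ext (fun n => D (b n) (a n))).
  intros; apply (L_sym _ HT Hc G D HG). apply DD_formula; auto.
Qed.

Lemma DD_tri f g h : inPi G D star f -> inPi G D star g -> inPi G D star h ->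
  Dle (star (DD G star f g) (DD G star g h)) (DD G star f h).
Proof.
  intros Hf Hg Hh; destruct (inPi_rep _ Hf) as [a Ha]; destruct (inPi_rep _ Hg) as [b Hb];
  destruct (inPi_rep _ Hh) as [c Hc'].
  apply (wconv_le (fun n => star (D (a n) (b n)) (D (b n) (c n))) (fun n => D (a n) (c n))).
  apply wconv_star; auto; apply DD_formula; auto. apply DD_formula; auto.
  intro; apply (L_tri _ HT Hc G D HG).
Qed.

Lemma DD_eq f g : inPi G D star f -> inPi G D star g -> DD G star f g = H0 -> f = g.
Proof.
  intros Hf Hg HE; destruct (inPi_rep _ Hf) as [a Ha]; destruct (inPi_rep _ Hg) as [b Hb].
  assert (Hab : toH0 (fun n => D (a n) (b n))) by (apply wconv_toH0; rewrite <- HE; apply DD_formula; auto).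
  assert (Hba : toH0 (fun n => D (b n) (a n))) by (apply (toH0_ext _ _ Hab); intros; apply (L_sym _ HT Hc G D HG)).
  apply functional_extensionality; intro x. apply Dle_antisym.
  - apply (wconv_le (fun n => star (D (b n) (a n)) (D (a n) x)) (fun n => D (b n) x)).
    apply wconv_H0star; auto. apply Ha. apply Hb. intro; apply (L_tri _ HT Hc G D HG).
  - apply (wconv_le (fun n => star (D (a n) (b n)) (D (b n) x)) (fun n => D (a n) x)).
    apply wconv_H0star; auto. apply Hb. apply Ha. intro; apply (L_tri _ HT Hc G D HG).
Qed.

Lemma sig_ext (f g : PiG G D star) : proj1_sig f = proj1_sig g -> f = g.
Proof. destruct f as [f Hf], g as [g Hg]; simpl; intro E; subst; f_equal; apply proof_irrelevance. Qed.

Lemma PMS_Pi : PMS (PiG G D star) (DPi G D star) star.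
Proof.
  split; auto. split; [|split].
  - intros [f Hf] [g Hg]; unfold DPi; simpl; split.
    + intro E; apply sig_ext; simpl; apply DD_eq; auto.
    + intro E; inversion E; subst; apply DD_refl; auto.
  - intros [f Hf] [g Hg]; unfold DPi; simpl; apply DD_sym; auto.
  - intros [f Hf] [g Hg] [h Hh]; unfold DPi; simpl; apply DD_tri; auto.
Qed.
End GP.

Lemma toH0_2_left a : toH0 a -> toH0_2 (fun m n => a m).
Proof. intros H t Ht e He; destruct (H t Ht e He) as [N HN]; exists N; intros; auto. Qed.
Lemma toH0_2_right a : toH0 a -> toH0_2 (fun m n => a n).
Proof. intros H t Ht e He; destruct (H t Ht e He) as [N HN]; exists N; intros; auto. Qed.

Lemma small_inv r : 0 < r -> exists K, forall k, (k >= K)%nat -> 1 / (INR k + 1) < r.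
Proof.
  intro Hr. destruct (INR_unbounded (1 / r)) as [K HK]. exists K; intros k Hk.
  apply le_INR in Hk. assert (0 < INR k + 1) by (pose proof (pos_INR k); lra).
  assert (1 / r < INR k + 1) by lra.
  apply (Rmult_lt_reg_r (INR k + 1)); auto. unfold Rdiv; rewrite Rmult_1_l, Rinv_l by lra.
  apply (Rmult_lt_reg_l (/ r)). apply Rinv_0_lt_compat; auto.
  rewrite <- Rmult_assoc, Rinv_l, Rmult_1_l, Rmult_1_r by lra. unfold Rdiv in H0; lra.
Qed.

Section GP2.
Variable star : Dplus -> Dplus -> Dplus.
Hypothesis HT : IsTriangleFun star.
Hypothesis Hc : ContTF star.
Variable G : Type.
Variable D : G -> G -> Dplus.
Hypothesis HG : PMS G D star.

Definition rep_of (f : PiG G D star) : nat -> G :=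
  proj1_sig (constructive_indefinite_description _ (inPi_rep star HT Hc G D HG (proj1_sig f) (proj2_sig f))).
Lemma rep_of_spec f : Rep G D (proj1_sig f) (rep_of f).
Proof. unfold rep_of; destruct constructive_indefinite_description; auto. Qed.

Lemma Complete_Pi : Complete (PiG G D star) (DPi G D star).
Proof.
  intros z Hz. apply (Cauchy_iff _ HT Hc _ _ (PMS_Pi _ HT Hc G D HG)) in Hz.
  set (fk := fun k => proj1_sig (z k)). set (ak := fun k => rep_of (z k)).
  assert (Hrep : forall k, Rep G D (fk k) (ak k)) by (intro k; apply rep_of_spec).
  set (r := fun k : nat => 1 / (INR k + 1)).
  assert (Hr : forall k, 0 < r k) by (intro k; unfold r; pose proof (pos_INR k); apply Rdiv_lt_0_compat; lra).
  set (nk := fun k => epsilon (inhabits 0%nat) (fun N => forall n, (n >= N)%nat -> 1 - r k < fk k (ak k n) (r k))).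
  assert (Hnk : forall k, 1 - r k < fk k (ak k (nk k)) (r k)).
  { intro k. assert (Hs : forall n, (n >= nk k)%nat -> 1 - r k < fk k (ak k n) (r k)).
    { unfold nk; apply epsilon_spec. apply (Rep_self _ HT Hc G D HG _ _ (Hrep k)); auto. }
    apply Hs; lia. }
  set (bk := fun k => ak k (nk k)).
  set (e := fun k => fk k (bk k)).
  assert (He : toH0 e).
  { intros t Ht eps Heps. destruct (small_inv (Rmin t eps)) as [K HK]. apply Rmin_glb_lt; auto.
    exists K; intros k Hk. specialize (HK k Hk). fold (r k) in HK.
    assert (r k < t) by (pose proof (Rmin_l t eps); lra). assert (r k < eps) by (pose proof (Rmin_r t eps); lra).
    pose proof (D_mono (e k) (r k) t ltac:(lra)). specialize (Hnk k). unfold e, bk in *. lra. }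
  assert (Hde : forall k, DD G star (delta G D (bk k)) (fk k) = e k).
  { intro k; unfold e; apply (DD_delta_l _ HT Hc G D HG (fk k) (ak k) (bk k)); auto. }
  assert (Hin : forall k, inPi G D star (fk k)) by (intro k; apply (proj2_sig (z k))).
  assert (Hb : Cauchy G D bk).
  { apply (Cauchy_iff _ HT Hc _ _ HG).
    apply (toH0_2_mono (fun m n => star (e m) (star (DD G star (fk m) (fk n)) (e n)))).
    - apply toH0_2_star; auto. apply toH0_2_left; auto. apply toH0_2_star; auto. apply toH0_2_right; auto.
    - intros m n. rewrite <- (DD_delta _ HT Hc G D HG (bk m) (bk n)).
      assert (Hd : forall k, inPi G D star (delta G D (bk k))) by (intro; apply (delta_in _ HT Hc G D HG)).
      eapply Dle_trans; [|apply (DD_tri _ HT Hc G D HG _ (fk m)); auto].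
      rewrite <- Hde. apply (star_mono _ HT Hc). apply Dle_refl.
      eapply Dle_trans; [|apply (DD_tri _ HT Hc G D HG _ (fk n)); auto].
      apply (star_mono _ HT Hc). apply Dle_refl. rewrite <- Hde. rewrite (DD_sym _ HT Hc G D HG); auto. apply Dle_refl. }
  destruct (limfun_exists _ HT Hc G D HG bk Hb) as [F HF].
  exists (exist _ F (Rep_in _ HT Hc G D HG F bk HF)).
  apply (Conv_iff _ HT Hc _ _ (PMS_Pi _ HT Hc G D HG)). unfold DPi; simpl.
  apply (toH0_mono (fun k => star (e k) (F (bk k)))).
  - apply toH0_star; auto. eapply Rep_self; eauto.
  - intro k. fold (fk k). eapply Dle_trans; [|apply (DD_tri _ HT Hc G D HG _ (delta G D (bk k))); auto].
    rewrite <- (DD_delta_l _ HT Hc G D HG F bk (bk k)) by auto.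
    rewrite (DD_sym _ HT Hc G D HG (fk k) (delta G D (bk k))); auto. rewrite Hde. apply Dle_refl.
    apply (delta_in _ HT Hc G D HG). apply (delta_in _ HT Hc G D HG). eapply Rep_in; eauto.
Qed.

Lemma density_Pi (f : PiG G D star) : exists a : nat -> G,
  wconv (fun n => DD G star (delta G D (a n)) (proj1_sig f)) H0.
Proof.
  exists (rep_of f). apply toH0_wconv.
  apply (toH0_ext (fun n => proj1_sig f (rep_of f n))).
  eapply Rep_self; eauto; apply rep_of_spec.
  intro n; symmetry; eapply DD_delta_l; eauto; apply rep_of_spec.
Qed.

Section Univ.
Variable X : Type.
Variable Lam : X -> X -> Dplus.
Variable phi : G -> X.
Hypothesis HX : PMS X Lam star.
Hypothesis HXc : Complete X Lam.
Hypothesis Hiso : Isometric G X D Lam phi.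
Hypothesis Hden : DenseImage G X Lam phi.

Definition Tmap (f : PiG G D star) : X :=
  epsilon (inhabits (phi (rep_of f 0%nat)))
    (fun x => forall a, Rep G D (proj1_sig f) a -> Converges X Lam (fun n => phi (a n)) x).

Lemma Tmap_spec f a : Rep G D (proj1_sig f) a -> Converges X Lam (fun n => phi (a n)) (Tmap f).
Proof.
  revert a. unfold Tmap; apply epsilon_spec.
  pose proof (rep_of_spec f) as Ha0. set (a0 := rep_of f) in *.
  destruct (HXc (fun n => phi (a0 n))) as [x Hx].
  { apply (Cauchy_iff _ HT Hc _ _ HX). apply (toH0_2_ext (fun m n => D (a0 m) (a0 n))).
    apply (Cauchy_iff _ HT Hc _ _ HG); apply Ha0. intros; rewrite Hiso; auto. }
  exists x. intros a Ha.
  apply (Conv_iff _ HT Hc _ _ HX). apply (Conv_iff _ HT Hc _ _ HX) in Hx.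
  apply (toH0_mono (fun n => star (Lam (phi (a n)) (phi (a0 n))) (Lam (phi (a0 n)) x))).
  - apply toH0_star; auto. apply (toH0_ext (fun n => D (a n) (a0 n))); [|intros; rewrite Hiso; auto].
    apply wconv_toH0. rewrite <- (DD_refl _ HT Hc G D HG (proj1_sig f)) by (apply proj2_sig).
    apply DD_formula; auto.
  - intros; apply (L_tri _ HT Hc _ _ HX).
Qed.

Lemma Tmap_delta a (Ha : inPi G D star (delta G D a)) : Tmap (exist _ (delta G D a) Ha) = phi a.
Proof.
  eapply (Conv_unique _ HT Hc _ _ HX (fun _ => phi a)).
  apply (Tmap_spec _ (fun _ => a)); simpl. apply (Rep_delta _ HT Hc G D HG).
  apply (Conv_const _ HT Hc _ _ HX).
Qed.

Lemma Tmap_iso : Isometric (PiG G D star) X (DPi G D star) Lam Tmap.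
Proof.
  intros f g. unfold DPi.
  pose proof (rep_of_spec f) as Hf. pose proof (rep_of_spec g) as Hg.
  apply (wconv_unique (fun n => D (rep_of f n) (rep_of g n))).
  - apply (wconv_ext (fun n => Lam (phi (rep_of f n)) (phi (rep_of g n)))); [intros; apply Hiso|].
    apply (L_cont _ HT Hc _ _ HX); apply Tmap_spec; auto.
  - apply DD_formula; auto.
Qed.

Lemma Tmap_bij : Bijective _ _ Tmap.
Proof.
  split.
  - intros f g E. apply (L_eq _ HT Hc _ _ (PMS_Pi _ HT Hc G D HG)).
    rewrite <- Tmap_iso, E. apply (L_refl _ HT Hc _ _ HX).
  - intro x. destruct (Hden x) as [c Hcx].
    assert (Hcc : Cauchy G D c).
    { apply (Cauchy_iff _ HT Hc _ _ HG). apply (toH0_2_ext (fun m n => Lam (phi (c m)) (phi (c n)))).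
      apply (Cauchy_iff _ HT Hc _ _ HX). eapply Conv_Cauchy; eauto. intros; apply Hiso. }
    assert (Hrep : Rep G D (fun y => Lam (phi y) x) c).
    { split; auto. intro y. apply (wconv_ext (fun n => Lam (phi (c n)) (phi y))); [intros; apply Hiso|].
      rewrite (L_sym _ HT Hc _ _ HX). apply (L_cont _ HT Hc _ _ HX); auto. apply (Conv_const _ HT Hc _ _ HX). }
    exists (exist _ _ (Rep_in _ HT Hc G D HG _ _ Hrep)).
    eapply (Conv_unique _ HT Hc _ _ HX); [apply Tmap_spec; exact Hrep| exact Hcx].
Qed.
End Univ.
End GP2.

Section GP3.
Variable star : Dplus -> Dplus -> Dplus.
Hypothesis HT : IsTriangleFun star.
Hypothesis Hc : ContTF star.
Variable G : Type.
Variable D : G -> G -> Dplus.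
Hypothesis HG : PMS G D star.

Lemma Rep_same f g a : Rep G D f a -> Rep G D g a -> f = g.
Proof. intros [_ Hf] [_ Hg]; apply functional_extensionality; intro x; eapply wconv_unique; eauto. Qed.

Lemma Rep_ext f a b : Rep G D f a -> (forall n, a n = b n) -> Rep G D f b.
Proof. intros H E; replace b with a; auto; apply functional_extensionality; auto. Qed.

Variable mul : G -> G -> G.
Hypothesis HGg : IPMGroup G mul D star.

Lemma massoc x y z : mul x (mul y z) = mul (mul x y) z.
Proof. apply HGg. Qed.

Definition eG : G := proj1_sig (constructive_indefinite_description _ (proj2 (proj1 (proj2 HGg)))).
Lemma eG_spec : (forall x, mul eG x = x /\ mul x eG = x) /\ (forall x, exists y, mul x y = eG /\ mul y x = eG).
Proof. unfold eG; destruct constructive_indefinite_description; auto. Qed.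
Lemma mul_e_l x : mul eG x = x. Proof. apply eG_spec. Qed.
Lemma mul_e_r x : mul x eG = x. Proof. apply eG_spec. Qed.
Definition inv (x : G) : G := proj1_sig (constructive_indefinite_description _ (proj2 eG_spec x)).
Lemma inv_r x : mul x (inv x) = eG. Proof. unfold inv; destruct constructive_indefinite_description as [y Hy]; apply Hy. Qed.
Lemma inv_l x : mul (inv x) x = eG. Proof. unfold inv; destruct constructive_indefinite_description as [y Hy]; apply Hy. Qed.
Lemma Dinv_r p q r : D (mul p r) (mul q r) = D p q. Proof. apply (proj2 (proj2 HGg)). Qed.
Lemma Dinv_l p q r : D (mul r p) (mul r q) = D p q. Proof. apply (proj2 (proj2 HGg)). Qed.

Lemma Rep_mul f g a b : Rep G D f a -> Rep G D g b ->
  Rep G D (odot G mul star f g) (fun n => mul (a n) (b n)).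
Proof.
  intros Hfa Hgb. pose proof Hfa as [Ha Hf]. pose proof Hgb as [Hb Hg].
  assert (Hab : Cauchy G D (fun n => mul (a n) (b n))).
  { apply (Cauchy_iff _ HT Hc _ _ HG). apply (Cauchy_iff _ HT Hc _ _ HG) in Ha. apply (Cauchy_iff _ HT Hc _ _ HG) in Hb.
    apply (toH0_2_mono (fun m n => star (D (a m) (a n)) (D (b m) (b n)))).
    apply toH0_2_star; auto.
    intros m n. rewrite <- (Dinv_r (a m) (a n) (b m)), <- (Dinv_l (b m) (b n) (a n)).
    apply (L_tri _ HT Hc _ _ HG). }
  split; auto. intro x.
  destruct (gen_lim _ HT Hc G D HG (fun n => mul (a n) (b n)) (fun _ => x)) as [U HU]; auto.
  apply (Cauchy_const _ HT Hc G D HG).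
  replace (odot G mul star f g x) with U; auto. apply Dle_antisym.
  - apply (wconv_le_const (fun n => star (f (a n)) (star (D (mul (a n) (b n)) x) (g (b n))))).
    + apply wconv_H0star; auto. eapply Rep_self; eauto. apply wconv_starH0; auto. eapply Rep_self; eauto.
    + intro n. eapply Dle_trans; [|apply (Dsup_ub _ (star (f (a n)) (g (mul (inv (a n)) x))))].
      * apply (star_mono _ HT Hc). apply Dle_refl.
        eapply Dle_trans; [|apply (Rep_Lip _ HT Hc G D HG g b Hgb (mul (inv (a n)) x) (b n))].
        rewrite <- (Dinv_l (mul (inv (a n)) x) (b n) (a n)). rewrite massoc, inv_r, mul_e_l.
        rewrite (L_sym _ HT Hc _ _ HG x). apply Dle_refl.
      * exists (a n), (mul (inv (a n)) x); split; auto. rewrite massoc, inv_r, mul_e_l; auto.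
  - apply Dsup_least. intros F [y [z [Hyz ->]]].
    apply (wconv_le (fun n => star (D (a n) y) (D (b n) z)) (fun n => D (mul (a n) (b n)) x)); auto.
    intro n. rewrite <- (Dinv_r (a n) y (b n)), <- (Dinv_l (b n) z y), <- Hyz. apply (L_tri _ HT Hc _ _ HG).
Qed.

Lemma inPi_odot f g : inPi G D star f -> inPi G D star g -> inPi G D star (odot G mul star f g).
Proof.
  intros Hf Hg; destruct (inPi_rep _ HT Hc G D HG _ Hf) as [a Ha]; destruct (inPi_rep _ HT Hc G D HG _ Hg) as [b Hb].
  apply (Rep_in _ HT Hc G D HG _ _ (Rep_mul _ _ _ _ Ha Hb)).
Qed.

Definition odotPi (f g : PiG G D star) : PiG G D star :=
  exist _ (odot G mul star (proj1_sig f) (proj1_sig g)) (inPi_odot _ _ (proj2_sig f) (proj2_sig g)).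

Lemma delta_mul a b : delta G D (mul a b) = odot G mul star (delta G D a) (delta G D b).
Proof.
  apply (Rep_same _ _ (fun _ => mul a b)). apply (Rep_delta _ HT Hc G D HG).
  apply (Rep_mul _ _ (fun _ => a) (fun _ => b)); apply (Rep_delta _ HT Hc G D HG).
Qed.

Lemma delta_inj a b : delta G D a = delta G D b -> a = b.
Proof.
  intro E. apply (L_eq _ HT Hc _ _ HG). pose proof (f_equal (fun h => h a) E) as E'.
  unfold delta in E'. rewrite (L_refl _ HT Hc _ _ HG) in E'. rewrite E', (L_sym _ HT Hc _ _ HG); auto.
Qed.

Lemma IPM_Pi : IPMGroup (PiG G D star) odotPi (DPi G D star) star.
Proof.
  split; [apply (PMS_Pi _ HT Hc G D HG)|split].
  - split.
    + intros f g h. apply (sig_ext _ HT Hc G D HG); simpl.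
      pose proof (rep_of_spec _ HT Hc G D HG f) as Ha; pose proof (rep_of_spec _ HT Hc G D HG g) as Hb;
      pose proof (rep_of_spec _ HT Hc G D HG h) as Hh.
      apply (Rep_same _ _ (fun n => mul (rep_of _ HT Hc G D HG f n) (mul (rep_of _ HT Hc G D HG g n) (rep_of _ HT Hc G D HG h n)))).
      apply Rep_mul; auto. apply Rep_mul; auto.
      eapply Rep_ext; [apply Rep_mul; [apply Rep_mul; eauto| eauto]|]. intro; simpl; symmetry; apply massoc.
    + exists (exist _ (delta G D eG) (delta_in _ HT Hc G D HG eG)). split.
      * intro f; pose proof (rep_of_spec _ HT Hc G D HG f) as Ha. split; apply (sig_ext _ HT Hc G D HG); simpl.
        -- apply (Rep_same _ _ (rep_of _ HT Hc G D HG f)); auto.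
           eapply Rep_ext; [apply (Rep_mul _ _ _ _ (Rep_delta _ HT Hc G D HG eG) Ha)|].
           intro; apply mul_e_l.
        -- apply (Rep_same _ _ (rep_of _ HT Hc G D HG f)); auto.
           eapply Rep_ext; [apply (Rep_mul _ _ _ _ Ha (Rep_delta _ HT Hc G D HG eG))|].
           intro; apply mul_e_r.
      * intro f; pose proof (rep_of_spec _ HT Hc G D HG f) as Ha.
        set (a := rep_of _ HT Hc G D HG f) in *.
        assert (Hci : Cauchy G D (fun n => inv (a n))).
        { apply (Cauchy_iff _ HT Hc _ _ HG). pose proof (proj1 Ha) as Hca. apply (Cauchy_iff _ HT Hc _ _ HG) in Hca.
          apply (toH0_2_ext (fun m n => D (a n) (a m))).
          { intros t Ht e He; destruct (Hca t Ht e He) as [N HN]; exists N; intros; auto. }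
          intros m n. rewrite <- (Dinv_l (inv (a m)) (inv (a n)) (a n)), inv_r.
          rewrite <- (Dinv_r (mul (a n) (inv (a m))) eG (a m)), <- massoc, inv_l, mul_e_r, mul_e_l. reflexivity. }
        destruct (limfun_exists _ HT Hc G D HG _ Hci) as [gi Hgi].
        exists (exist _ gi (Rep_in _ HT Hc G D HG _ _ Hgi)). split; apply (sig_ext _ HT Hc G D HG); simpl.
        -- apply (Rep_same _ _ (fun _ => eG)); [|apply (Rep_delta _ HT Hc G D HG)].
           eapply Rep_ext; [apply Rep_mul; [exact Ha| exact Hgi]|]. intro; apply inv_r.
        -- apply (Rep_same _ _ (fun _ => eG)); [|apply (Rep_delta _ HT Hc G D HG)].
           eapply Rep_ext; [apply Rep_mul; [exact Hgi| exact Ha]|]. intro; apply inv_l.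
  - intros f g h. unfold DPi; simpl.
    pose proof (rep_of_spec _ HT Hc G D HG f) as Ha; pose proof (rep_of_spec _ HT Hc G D HG g) as Hb;
    pose proof (rep_of_spec _ HT Hc G D HG h) as Hh.
    set (a := rep_of _ HT Hc G D HG f) in *; set (b := rep_of _ HT Hc G D HG g) in *; set (c := rep_of _ HT Hc G D HG h) in *.
    split.
    + apply (DD_lim _ HT Hc G D HG _ _ (fun n => mul (a n) (c n)) (fun n => mul (b n) (c n))); try (apply Rep_mul; auto).
      apply (wconv_ext (fun n => D (a n) (b n))). intro; symmetry; apply Dinv_r.
      apply (DD_formula _ HT Hc G D HG); auto.
    + apply (DD_lim _ HT Hc G D HG _ _ (fun n => mul (c n) (a n)) (fun n => mul (c n) (b n))); try (apply Rep_mul; auto).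
      apply (wconv_ext (fun n => D (a n) (b n))). intro; symmetry; apply Dinv_l.
      apply (DD_formula _ HT Hc G D HG); auto.
Qed.

Section UnivG.
Variable X : Type.
Variable mulX : X -> X -> X.
Variable Lam : X -> X -> Dplus.
Variable phi : G -> X.
Hypothesis HXg : IPMGroup X mulX Lam star.
Hypothesis HXc : Complete X Lam.
Hypothesis Hiso : Isometric G X D Lam phi.
Hypothesis Hden : DenseImage G X Lam phi.
Hypothesis Hhom : forall a b, phi (mul a b) = mulX (phi a) (phi b).

Lemma Tmap_hom f g : Tmap _ HT Hc G D HG X Lam phi (odotPi f g) =
  mulX (Tmap _ HT Hc G D HG X Lam phi f) (Tmap _ HT Hc G D HG X Lam phi g).
Proof.
  pose proof (proj1 HXg) as HX.
  pose proof (rep_of_spec _ HT Hc G D HG f) as Ha; pose proof (rep_of_spec _ HT Hc G D HG g) as Hb.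
  set (a := rep_of _ HT Hc G D HG f) in *; set (b := rep_of _ HT Hc G D HG g) in *.
  eapply (Conv_unique _ HT Hc _ _ HX (fun n => phi (mul (a n) (b n)))).
  - apply (Tmap_spec _ HT Hc G D HG X Lam phi HX HXc Hiso Hden). simpl. apply Rep_mul; auto.
  - pose proof (Tmap_spec _ HT Hc G D HG X Lam phi HX HXc Hiso Hden f a Ha) as Cf.
    pose proof (Tmap_spec _ HT Hc G D HG X Lam phi HX HXc Hiso Hden g b Hb) as Cg.
    apply (Conv_iff _ HT Hc _ _ HX) in Cf; apply (Conv_iff _ HT Hc _ _ HX) in Cg. apply (Conv_iff _ HT Hc _ _ HX).
    set (x := Tmap _ HT Hc G D HG X Lam phi f) in *. set (y := Tmap _ HT Hc G D HG X Lam phi g) in *.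
    apply (toH0_mono (fun n => star (Lam (phi (a n)) x) (Lam (phi (b n)) y))).
    apply toH0_star; auto.
    intro n. rewrite Hhom.
    rewrite <- (proj1 (proj2 (proj2 HXg) (phi (a n)) x (phi (b n)))).
    rewrite <- (proj2 (proj2 (proj2 HXg) (phi (b n)) y x)).
    apply (L_tri _ HT Hc _ _ HX).
Qed.
End UnivG.
End GP3.

Theorem mainTheorem13 (G : Type) (D : G -> G -> Dplus)
  (star : Dplus -> Dplus -> Dplus)
  (Hcont : ContTF star) (HG : PMS G D star) :
  ( PMS (PiG G D star) (DPi G D star) star /\
    Complete (PiG G D star) (DPi G D star) /\
    (forall a, inPi G D star (delta G D a)) /\
    (forall a b, DD G star (delta G D a) (delta G D b) = D a b) /\
    (forall f : PiG G D star, exists a : nat -> G,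
        wconv (fun n => DD G star (delta G D (a n)) (proj1_sig f)) H0) /\
    (forall (X : Type) (Lam : X -> X -> Dplus) (phi : G -> X),
        PMS X Lam star -> Complete X Lam ->
        Isometric G X D Lam phi -> DenseImage G X Lam phi ->
        exists T : PiG G D star -> X,
          Bijective _ _ T /\ Isometric _ X (DPi G D star) Lam T /\
          (forall a (Ha : inPi G D star (delta G D a)),
              T (exist _ (delta G D a) Ha) = phi a)) ) /\
  (forall mul : G -> G -> G, IPMGroup G mul D star ->
     (forall f g, inPi G D star f -> inPi G D star g ->
        inPi G D star (odot G mul star f g)) /\
     (exists odotPi : PiG G D star -> PiG G D star -> PiG G D star,
        (forall f g, proj1_sig (odotPi f g) = odot G mul star (proj1_sig f) (proj1_sig g)) /\
        IPMGroup (PiG G D star) odotPi (DPi G D star) star /\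
        (forall a b, delta G D (mul a b) = odot G mul star (delta G D a) (delta G D b)) /\
        (forall a b, delta G D a = delta G D b -> a = b) /\
        (forall (X : Type) (mulX : X -> X -> X) (Lam : X -> X -> Dplus) (phi : G -> X),
           IPMGroup X mulX Lam star -> Complete X Lam ->
           Isometric G X D Lam phi -> DenseImage G X Lam phi ->
           (forall a b, phi (mul a b) = mulX (phi a) (phi b)) ->
           exists T : PiG G D star -> X,
             Bijective _ _ T /\ Isometric _ X (DPi G D star) Lam T /\
             (forall a (Ha : inPi G D star (delta G D a)),
                 T (exist _ (delta G D a) Ha) = phi a) /\
             (forall f g, T (odotPi f g) = mulX (T f) (T g))))).
Proof.
  assert (HT : IsTriangleFun star) by apply HG.
  split.
  - split; [apply (PMS_Pi _ HT Hcont G D HG)|].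
    split; [apply (Complete_Pi _ HT Hcont G D HG)|].
    split; [intro a; apply (delta_in _ HT Hcont G D HG)|].
    split; [intros a b; apply (DD_delta _ HT Hcont G D HG)|].
    split; [intro f; apply (density_Pi _ HT Hcont G D HG)|].
    intros X Lam phi HX HXc Hiso Hden.
    exists (Tmap _ HT Hcont G D HG X Lam phi).
    split; [apply (Tmap_bij _ HT Hcont G D HG X Lam phi HX HXc Hiso Hden)|].
    split; [apply (Tmap_iso _ HT Hcont G D HG X Lam phi HX HXc Hiso Hden)|].
    intros a Ha; apply (Tmap_delta _ HT Hcont G D HG X Lam phi HX HXc Hiso Hden).
  - intros mul HGg. split.
    + intros f g Hf Hg; apply (inPi_odot _ HT Hcont G D HG mul HGg); auto.
    + exists (odotPi _ HT Hcont G D HG mul HGg).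
      split; [intros; reflexivity|].
      split; [apply (IPM_Pi _ HT Hcont G D HG mul HGg)|].
      split; [apply (delta_mul _ HT Hcont G D HG mul HGg)|].
      split; [apply (delta_inj _ HT Hcont G D HG mul HGg)|].
      intros X mulX Lam phi HXg HXc Hiso Hden Hhom.
      exists (Tmap _ HT Hcont G D HG X Lam phi).
      split; [apply (Tmap_bij _ HT Hcont G D HG X Lam phi (proj1 HXg) HXc Hiso Hden)|].
      split; [apply (Tmap_iso _ HT Hcont G D HG X Lam phi (proj1 HXg) HXc Hiso Hden)|].
      split; [intros a Ha; apply (Tmap_delta _ HT Hcont G D HG X Lam phi (proj1 HXg) HXc Hiso Hden)|].
      intros f g; apply (Tmap_hom _ HT Hcont G D HG mul HGg X mulX Lam phi HXg HXc Hiso Hden Hhom).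
Qed.
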